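(* Let $G$ be a directed graph with $n$ nodes and $Z$ a zero forcing set of $G$ with $|Z|=m$. Let $\mathcal{C}$ be a set of node-disjoint chains covering $V(G)$ with set of sources $Z$ and $T$ a time function for $\mathcal{C}$ such that $G\in\mathcal{G}^{\mathcal{C},T}$. Then $G=\mathcal{G}^{\mathcal{C},T}_{\mathrm{perf}}$ if and only if $|E(G)|=|E_{\mathrm{perf}}|$, where $E_{\mathrm{perf}}$ is the edge set of $\mathcal{G}^{\mathcal{C},T}_{\mathrm{perf}}$ (equivalently, iff $|E(G)|=\frac12n(n+1)+\frac12m(2n-m-1)$).
   Context: Graphs are directed, self-loops allowed. Zero forcing: with nodes colored black/white, a black node with exactly one white out-neighbor turns it black; $S$ is a zero forcing set if starting from black set $S$ and repeating this rule makes all nodes black. A chain is a directed path graph with source (start node) and sink (end node); for a non-sink $v$, $v+1$ is its out-neighbor. For node-disjoint chains $\mathcal{C}=\{C_1,\ldots,C_m\}$, $V=\bigcup_iV(C_i)$, $\gamma=|V|-m+1$, a time function is $T:V\to\{1,\ldots,\gamma\}$ with (1) $T(v)=1$ for every source; (2) distinct non-source nodes get distinct values; (3) $T(v)<T(v+1)$ for non-sink $v$. $T_{\max}(v)=\gamma$ for a sink $v$, else $T_{\max}(v)=T(v+1)-1$. $\mathcal{G}^{\mathcal{C},T}$ is the set of graphs $G$ with $V(G)=V$, $\bigcup_iE(C_i)\subseteq E(G)$, and $(u,v)\notin E(G)$ whenever $(u,v)\notin\bigcup_iE(C_i)$ and $T_{\max}(u)<T(v)$. $\mathcal{G}^{\mathcal{C},T}_{\mathrm{perf}}$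 has node set $V$ and edge set $E_{\mathrm{perf}}=\bigcup_iE(C_i)\cup\{(u,v)\in V\times V: T_{\max}(u)\geq T(v)\}$. *)

(* Defs.v *)
From mathcomp Require Import all_boot.
Set Implicit Arguments. Unset Strict Implicit. Unset Printing Implicit Defensive.

Section ZF.
Variable T : finType.

(* A directed graph on node set T (self-loops allowed) is given by its edge set
   E : {set T * T}; (u, v) \in E means u -> v. *)
Definition out_white (E : {set T * T}) (B : {set T}) (u : T) : {set T} :=
  [set w | ((u, w) \in E) && (w \notin B)].

Inductive zf_reach (E : {set T * T}) (S : {set T}) : {set T} -> Prop :=
  | zf_base : zf_reach E S S
  | zf_step B u w : zf_reach E S B -> u \in B ->
      out_white E B u = [set w] -> zf_reach E S (w |: B).

Definition zero_forcing_set (E : {set T * T}) (S : {set T}) : Prop :=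
  zf_reach E S [set: T].

(* A family of chains is a list of chains, each chain a list of nodes
   [:: v_1; ...; v_k] with edges v_i -> v_{i+1}. *)
Definition chains_cover (C : seq (seq T)) : Prop :=
  [/\ all (fun c => c != [::]) C, uniq (flatten C) & forall v : T, v \in flatten C].

Definition chain_sources (C : seq (seq T)) : {set T} :=
  [set x | has (fun c => ohead c == Some x) C].

Definition chain_edges (C : seq (seq T)) : {set T * T} :=
  [set e | has (fun c => e \in zip c (behead c)) C].

Definition gamma (C : seq (seq T)) : nat := #|T| - size C + 1.

Definition is_time_function (C : seq (seq T)) (tf : T -> nat) : Prop :=
  [/\ forall v, 1 <= tf v <= gamma C,
      forall v, v \in chain_sources C -> tf v = 1,
      forall u v, u \notin chain_sources C -> v \notin chain_sources C ->
                  u != v -> tf u != tf v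
    & forall u v, (u, v) \in chain_edges C -> tf u < tf v].

Definition Tmax (C : seq (seq T)) (tf : T -> nat) (v : T) : nat :=
  match [pick w | (v, w) \in chain_edges C] with
  | Some w => tf w - 1
  | None => gamma C
  end.

Definition in_graph_class (C : seq (seq T)) (tf : T -> nat) (E : {set T * T}) : Prop :=
  chain_edges C \subset E /\
  forall u v, (u, v) \notin chain_edges C -> Tmax C tf u < tf v -> (u, v) \notin E.

Definition E_perf (C : seq (seq T)) (tf : T -> nat) : {set T * T} :=
  chain_edges C :|: [set e | tf e.2 <= Tmax C tf e.1].

End ZF.

(* Main.v *)
Require Import Defs.
From mathcomp Require Import all_boot.
From mathcomp Require Import zify.
Set Implicit Arguments. Unset Strict Implicit. Unset Printing Implicit Defensive.
Lemma perm_iota (s : seq nat) a N : uniq s -> size s = N ->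
  (forall x, x \in s -> a <= x < a + N) -> perm_eq s (iota a N).
Proof.
move=> Us Hs Hx; apply: uniq_perm => //; first exact: iota_uniq.
have S1 : {subset s <= iota a N} by move=> x /Hx; rewrite mem_iota.
have S2 : size (iota a N) <= size s by rewrite size_iota Hs.
exact: (uniq_min_size Us S1 S2).2.
Qed.

Lemma sum_iota_le a d k : \sum_(x <- iota a d) (x <= k) = minn d (k.+1 - a).
Proof.
elim: d => [|d IH]; first by rewrite big_nil min0n.
rewrite -[d.+1]addn1 iotaD big_cat big_seq1 IH /=.
case: (leqP (a + d) k) => H /=; lia.
Qed.

Lemma sum_iota1 d : 2 * \sum_(x <- iota 1 d) x = d * d.+1.
Proof.
elim: d => [|d IH]; first by rewrite big_nil.
rewrite -[d.+1]addn1 iotaD big_cat big_seq1 mulnDr IH. lia.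
Qed.

Section Chains.
Variable T : eqType.

Lemma zip_behead_nth (c : seq T) u w : (u,w) \in zip c (behead c) ->
  exists i, [/\ i.+1 < size c, nth u c i = u & nth u c i.+1 = w].
Proof.
elim: c => [|x s IH] //=.
case: s IH => [|y s'] IH //=.
rewrite in_cons => /orP [/eqP [-> ->]|H]; first by exists 0.
have [i [H1 H2 H3]] := IH H.
by exists i.+1.
Qed.

Lemma nth_zip_behead (c : seq T) x i : i.+1 < size c ->
  (nth x c i, nth x c i.+1) \in zip c (behead c).
Proof.
elim: c i => [|a s IH] i //=.
case: s IH => [|b s'] IH //= .
case: i => [|j] /=; first by rewrite in_cons eqxx.
move=> Hj; rewrite in_cons; apply/orP; right; exact: (IH j Hj).
Qed.

Lemma chain_unique (C : seq (seq T)) c1 c2 x : uniq (flatten C) ->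
  c1 \in C -> c2 \in C -> x \in c1 -> x \in c2 -> c1 = c2.
Proof.
elim: C => [|c C IH] //= U.
rewrite cat_uniq in U; case/and3P: U => _ D U.
have F : forall c', c' \in C -> x \in c -> x \in c' -> False.
  move=> c' Hc' xc xc'; move/hasP: D; apply; exists x => //.
  by apply/flattenP; exists c'.
rewrite !in_cons => /orP [/eqP ->|H1] /orP [/eqP ->|H2] //.
- by move=> xc xc2; case: (F _ H2 xc xc2).
- by move=> xc1 xc; case: (F _ H1 xc xc1).
- exact: IH.
Qed.

Lemma chain_uniq (C : seq (seq T)) c : uniq (flatten C) -> c \in C -> uniq c.
Proof.
elim: C => [|c' C IH] //= U; rewrite cat_uniq in U; case/and3P: U => U1 _ U.
by rewrite in_cons => /orP [/eqP ->|H] //; apply: IH.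
Qed.

Lemma pmap_ohead_flatten (C : seq (seq T)) x : x \in pmap ohead C -> x \in flatten C.
Proof.
elim: C => [|c C IH] //=.
case: c => [|a s] /=; first by move/IH; rewrite /=.
rewrite in_cons => /orP [/eqP ->|/IH H]; first by rewrite in_cons eqxx.
by rewrite in_cons mem_cat H !orbT.
Qed.

Lemma pmap_ohead_uniq (C : seq (seq T)) : uniq (flatten C) -> all (fun c => c != [::]) C ->
  uniq (pmap ohead C) /\ size (pmap ohead C) = size C.
Proof.
elim: C => [|c C IH] //= U /andP [Hc HC].
rewrite cat_uniq in U; case/and3P: U => _ D U.
have [IH1 IH2] := IH U HC.
case: c Hc D => [|a s] //= _ D; rewrite IH1 IH2; split => //.
rewrite andbT; apply/negP => /pmap_ohead_flatten H.
by move/hasP: D; apply; exists a => //; rewrite in_cons eqxx.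
Qed.
End Chains.

Section Main.
Variable T : finType.
Variable C : seq (seq T).
Hypothesis Hcov : chains_cover C.

Let U : uniq (flatten C). Proof. by case: Hcov. Qed.

Lemma ce_inv u w x0 : (u, w) \in chain_edges C ->
  exists c i, [/\ c \in C, i.+1 < size c, nth x0 c i = u & nth x0 c i.+1 = w].
Proof.
rewrite inE => /hasP [c Hc /zip_behead_nth [i [H1 H2 H3]]].
exists c, i; split => //.
- by rewrite (set_nth_default u) // ltnW.
- by rewrite (set_nth_default u).
Qed.

Lemma succ_unique u w w' : (u, w) \in chain_edges C -> (u, w') \in chain_edges C -> w = w'.
Proof.
move=> /(ce_inv u) [c [i [Hc Hi Hu Hw]]] /(ce_inv u) [c' [j [Hc' Hj Hu' Hw']]].
have E : c = c'.
  apply: (chain_unique (x := u) U Hc Hc').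
  - by rewrite -Hu mem_nth // ltnW.
  - by rewrite -Hu' mem_nth // ltnW.
subst c'.
have Uc := chain_uniq U Hc.
have : nth u c i == nth u c j by rewrite Hu Hu'.
rewrite nth_uniq ?(ltnW Hi) ?(ltnW Hj) // => /eqP E; subst j.
by rewrite -Hw -Hw'.
Qed.

Lemma pred_unique u u' w : (u, w) \in chain_edges C -> (u', w) \in chain_edges C -> u = u'.
Proof.
move=> /(ce_inv w) [c [i [Hc Hi Hu Hw]]] /(ce_inv w) [c' [j [Hc' Hj Hu' Hw']]].
have E : c = c'.
  apply: (chain_unique (x := w) U Hc Hc').
  - by rewrite -Hw mem_nth.
  - by rewrite -Hw' mem_nth.
subst c'.
have Uc := chain_uniq U Hc.
have : nth w c i.+1 == nth w c j.+1 by rewrite Hw Hw'.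
rewrite nth_uniq // => /eqP [E]; subst j.
by rewrite -Hu -Hu'.
Qed.

Lemma ce_nonsource u w : (u, w) \in chain_edges C -> w \notin chain_sources C.
Proof.
move=> /(ce_inv w) [c [i [Hc Hi Hu Hw]]].
rewrite inE; apply/hasP => [[c' Hc' /eqP Hh]].
case: c' Hh Hc' => [|a s] //= [Ea] Hc'; subst a.
have E : c = (w :: s).
  apply: (chain_unique (x := w) U Hc Hc').
  - by rewrite -Hw mem_nth.
  - by rewrite in_cons eqxx.
subst c.
have Uc := chain_uniq U Hc.
have : nth w (w :: s) i.+1 == nth w (w :: s) 0 by rewrite Hw.
by rewrite nth_uniq.
Qed.

Lemma nonsource_pred w : w \notin chain_sources C -> exists u, (u, w) \in chain_edges C.
Proof.
move=> Hw.
have : w \in flatten C by case: Hcov.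
move/flattenP => [c Hc wc].
case: c Hc wc => [|a s] // Hc.
rewrite in_cons => /orP [/eqP E|ws].
  subst a; case/negP: Hw; rewrite inE; apply/hasP; exists (w :: s) => //.
exists (nth w (a :: s) (index w s)).
rewrite inE; apply/hasP; exists (a :: s) => //.
have H := @nth_zip_behead _ (a :: s) w (index w s).
by move: H; rewrite /= ltnS index_mem nth_index //; apply.
Qed.

Lemma card_sources : #|chain_sources C| = size C.
Proof.
have [U1 S1] : uniq (pmap ohead C) /\ size (pmap ohead C) = size C.
  by apply: pmap_ohead_uniq => //; case: Hcov.
have -> : chain_sources C = [set x in pmap ohead C].
  apply/setP => x; rewrite !inE mem_pmap.
  apply/hasP/mapP => [[c Hc /eqP E]|[c Hc E]]; exists c => //; by rewrite E.
by rewrite cardsE; move/card_uniqP: U1 => ->.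
Qed.


Lemma split_sum (F : T -> nat) (A : {set T}) :
  \sum_v F v = \sum_(v in A) F v + \sum_(v in ~: A) F v.
Proof. by rewrite (bigID (mem A)) /=; congr (_ + _); apply: eq_bigl => v; rewrite ?inE. Qed.

Variable tf : T -> nat.
Hypothesis Htf : is_time_function C tf.

Local Notation CE := (chain_edges C).
Local Notation S := (chain_sources C).
Local Notation g := (gamma C).

Lemma m_le_n : size C <= #|T|.
Proof. by rewrite -card_sources max_card. Qed.

Lemma tf_ns w : w \notin S -> 2 <= tf w <= g.
Proof.
case: Htf => H1 _ _ H4 Hw.
have [u Hu] := nonsource_pred Hw.
have := H4 _ _ Hu; have := H1 u; have := H1 w; lia.
Qed.

Lemma tf_inj u v : u \notin S -> v \notin S -> tf u = tf v -> u = v.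
Proof.
case: Htf => _ _ H3 _ Hu Hv E.
by case: (eqVneq u v) => // /(H3 _ _ Hu Hv); rewrite E eqxx.
Qed.

Lemma TmaxE u w : (u, w) \in CE -> Tmax C tf u = tf w - 1.
Proof.
move=> H; rewrite /Tmax; case: pickP => [w' Hw'|N].
- by rewrite (succ_unique Hw' H).
- by move: (N w); rewrite H.
Qed.

Lemma TmaxS u : (forall w, (u, w) \notin CE) -> Tmax C tf u = g.
Proof.
move=> N; rewrite /Tmax; case: pickP => [w' Hw'|//].
by move: (N w'); rewrite Hw'.
Qed.

Lemma Tmax_range u : 1 <= Tmax C tf u <= g.
Proof.
case: (pickP (fun w => (u, w) \in CE)) => [w Hw|N].
- rewrite (TmaxE Hw); have := tf_ns (ce_nonsource Hw); lia.
- rewrite TmaxS; last by move=> w; rewrite N.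
  rewrite /gamma; lia.
Qed.

Lemma sum_le k : 1 <= k <= g -> \sum_v (tf v <= k) = size C + (k - 1).
Proof.
move=> Hk; rewrite (split_sum _ S); congr (_ + _).
  rewrite -card_sources -sum1_card; apply: eq_bigr => v Hv.
  case: Htf => _ H2 _ _; rewrite H2 //; lia.
have P : perm_eq (map tf (enum (~: S))) (iota 2 (#|T| - size C)).
  apply: perm_iota.
  - rewrite map_inj_in_uniq ?enum_uniq // => u v; rewrite !mem_enum !in_setC.
    exact: tf_inj.
  - by rewrite size_map -cardE; have := cardsC S; rewrite card_sources; lia.
  - move=> x /mapP [v]; rewrite mem_enum in_setC => /tf_ns; rewrite /gamma => H ->.
    have := m_le_n; lia.
rewrite -big_enum /= -(big_map tf xpredT (fun x => nat_of_bool (x <= k))).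
rewrite (perm_big _ P) sum_iota_le; move: Hk; rewrite /gamma; have := m_le_n; lia.
Qed.


Local Notation NK := [set u | [exists w, (u, w) \in CE]].

Lemma card_CE_NS : #|CE| = #|~: S|.
Proof.
have -> : ~: S = [set e.2 | e in CE].
  apply/setP => w; rewrite in_setC; apply/idP/imsetP.
  - by move=> /nonsource_pred [u Hu]; exists (u, w).
  - by move=> [[u w'] He ->]; exact: ce_nonsource He.
rewrite card_in_imset // => -[u w] [u' w'] H1 H2 /= E; subst w'.
by rewrite (pred_unique H1 H2).
Qed.

Lemma card_CE_NK : #|CE| = #|NK|.
Proof.
have -> : NK = [set e.1 | e in CE].
  apply/setP => u; rewrite inE; apply/existsP/imsetP.
  - by move=> [w Hw]; exists (u, w).
  - by move=> [[u' w] He ->]; exists w.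
rewrite card_in_imset // => -[u w] [u' w'] H1 H2 /= E; subst u'.
by rewrite (succ_unique H1 H2).
Qed.

Lemma card_NS : #|~: S| = #|T| - size C.
Proof. by have := cardsC S; rewrite card_sources; lia. Qed.

Lemma sum_Tmax_NK : \sum_(u in NK) Tmax C tf u = \sum_(x <- iota 1 (#|T| - size C)) x.
Proof.
have P : perm_eq (map (Tmax C tf) (enum NK)) (iota 1 (#|T| - size C)).
  apply: perm_iota.
  - rewrite map_inj_in_uniq ?enum_uniq // => u v; rewrite !mem_enum !inE.
    move=> /existsP [w Hw] /existsP [w' Hw']; rewrite (TmaxE Hw) (TmaxE Hw').
    have := tf_ns (ce_nonsource Hw); have := tf_ns (ce_nonsource Hw') => A1 A2 E.
    have E' : tf w = tf w' by lia.
    have := tf_inj (ce_nonsource Hw) (ce_nonsource Hw') E' => EE; subst w'.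
    exact: pred_unique Hw Hw'.
  - by rewrite size_map -cardE -card_CE_NK card_CE_NS card_NS.
  - move=> x /mapP [u]; rewrite mem_enum inE => /existsP [w Hw] ->.
    rewrite (TmaxE Hw); have := tf_ns (ce_nonsource Hw); rewrite /gamma.
    have := m_le_n; lia.
rewrite -big_enum /= -(big_map (Tmax C tf) xpredT (fun x => x)).
by rewrite (perm_big _ P).
Qed.

Lemma card_Eperf : 2 * #|E_perf C tf| =
  #|T| * (#|T| + 1) + size C * (2 * #|T| - size C - 1).
Proof.
set P := [set e | tf e.2 <= Tmax C tf e.1].
have I : CE :&: P = set0.
  apply/setP => -[u w]; rewrite in_set0 in_setI; apply/negP => /andP [H1].
  rewrite inE /= (TmaxE H1); have := tf_ns (ce_nonsource H1); lia.
have EP : #|E_perf C tf| = #|CE| + #|P| by rewrite /E_perf cardsU I cards0 subn0.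
have CP : #|P| = \sum_u \sum_v (tf v <= Tmax C tf u).
  rewrite -sum1_card big_mkcond /= pair_big /=; apply: eq_bigr => -[u v] _.
  by rewrite inE /=; case: (_ <= _).
have CP2 : #|P| = \sum_u (size C + (Tmax C tf u - 1)).
  by rewrite CP; apply: eq_bigr => u _; rewrite sum_le // Tmax_range.
have CP3 : #|P| + #|T| = #|T| * size C + \sum_u Tmax C tf u.
  have -> : #|T| * size C = \sum_(u : T) size C by rewrite sum_nat_const mulnC.
  have -> : #|T| = \sum_(u : T) 1 by rewrite sum_nat_const muln1.
  rewrite CP2 -!big_split.
  apply: eq_bigr => u _; have := Tmax_range u; rewrite /=; lia.
have ST : \sum_u Tmax C tf u = \sum_(x <- iota 1 (#|T| - size C)) x + size C * gamma C.
  rewrite (split_sum _ NK) sum_Tmax_NK; congr (_ + _).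
  rewrite (eq_bigr (fun _ => gamma C)); last first.
    by move=> u; rewrite in_setC inE => /existsPn H; rewrite TmaxS.
  rewrite sum_nat_const; congr (_ * _).
  have := cardsC NK; rewrite -card_CE_NK card_CE_NS card_NS; have := m_le_n; lia.
have := sum_iota1 (#|T| - size C).
have := card_CE_NS; rewrite card_NS.
move: ST CP3 EP; rewrite /gamma; have := m_le_n.
move: (\sum_(x <- _) x) (\sum_u _) => s1 s2.
move=> *; nia.
Qed.

End Main.

Theorem corollary1 (T : finType) (E : {set T * T}) (Z : {set T})
    (C : seq (seq T)) (tf : T -> nat) :
  zero_forcing_set E Z ->
  chains_cover C ->
  chain_sources C = Z ->
  is_time_function C tf ->
  in_graph_class C tf E ->
  (E = E_perf C tf <-> #|E| = #|E_perf C tf|) /\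
  (E = E_perf C tf <->
     2 * #|E| = #|T| * (#|T| + 1) + #|Z| * (2 * #|T| - #|Z| - 1)).
Proof.
move=> _ Hcov HZ Htf [Hsub Hnot].
have Sub : E \subset E_perf C tf.
  apply/subsetP => -[u v] He; rewrite /E_perf in_setU.
  case Hc: ((u, v) \in chain_edges C) => //=.
  rewrite inE /= leqNgt; apply/negP => Hlt.
  by move: (Hnot u v (negbT Hc) Hlt); rewrite He.
have Eq1 : E = E_perf C tf <-> #|E| = #|E_perf C tf|.
  split => [-> //|H]; apply/eqP; rewrite eqEcard Sub H leqnn //.
split => //.
rewrite Eq1 -HZ card_sources // -(card_Eperf Hcov Htf); lia.
Qed.
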